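(* Let $C=\{x\in\ell_2:\|x\|_1\le1\}$, considered as a subset of $\ell_2$ with the $\ell_2$-norm topology, where $\|x\|_1=\sum_i|x_i|$. Then $\operatorname{icr} C=\operatorname{fri} C=\{x\in\ell_2:\|x\|_1<1\}$.
   Context: For a convex set $C$, a convex subset $F\subseteq C$ is a face of $C$ if for every $x\in F$ and all $y,z\in C$ with $x\in(y,z)=\{(1-t)y+tz:t\in(0,1)\}$ we have $y,z\in F$; $F_{\min}(x,C)$ is the intersection of all faces of $C$ containing $x\in C$. $\operatorname{icr} C=\{x\in C:\forall y\in C\ \exists z\in C,\ x\in(y,z)\}$; $\operatorname{fri} C=\{x\in C: C\subseteq\overline{F_{\min}(x,C)}\}$. *)

(* Defs.v *)
From HB Require Import structures.
From mathcomp Require Import all_boot all_order all_algebra.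
From mathcomp Require Import all_classical all_reals all_analysis.
Set Implicit Arguments. Unset Strict Implicit. Unset Printing Implicit Defensive.
Import Order.TTheory GRing.Theory Num.Theory.
Local Open Scope classical_set_scope.
Local Open Scope ring_scope.

Section Defs.
Variable R : realType.
Local Notation seqR := (nat -> R).

Definition l1norm (x : seqR) : \bar R := (\sum_(0 <= i <oo) (`|x i|)%:E)%E.
Definition l2sq (x : seqR) : \bar R := (\sum_(0 <= i <oo) ((x i) ^+ 2)%:E)%E.

Definition l2 : set seqR := [set x | (l2sq x < +oo)%E].

Definition l2closure (F : set seqR) : set seqR :=
  [set z | l2 z /\ forall e : R, 0 < e ->
     exists2 y, F y & (l2sq (fun i => (z i - y i)%R) < (e ^+ 2)%:E)%E].

Definition in_open_seg (x y z : seqR) : Prop :=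
  exists t : R, 0 < t /\ t < 1 /\ x = (fun i => (1 - t) * y i + t * z i).

Definition convex_set (F : set seqR) : Prop :=
  forall y z, F y -> F z -> forall t : R, 0 <= t -> t <= 1 ->
    F (fun i => (1 - t) * y i + t * z i).

Definition is_face (C F : set seqR) : Prop :=
  F `<=` C /\ convex_set F /\
  forall x y z, F x -> C y -> C z -> in_open_seg x y z -> F y /\ F z.

Definition Fmin (x : seqR) (C : set seqR) : set seqR :=
  [set u | forall F, is_face C F -> F x -> F u].

Definition icr (C : set seqR) : set seqR :=
  [set x | C x /\ forall y, C y -> exists2 z, C z & in_open_seg x y z].

Definition fri (C : set seqR) : set seqR :=
  [set x | C x /\ C `<=` l2closure (Fmin x C)].

End Defs.

(* Main.v *)
Require Import Defs.
From HB Require Import structures.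
From mathcomp Require Import all_boot all_order all_algebra.
From mathcomp Require Import all_classical all_reals all_analysis.
From mathcomp Require Import ring lra.
Import Order.TTheory GRing.Theory Num.Theory.
Local Open Scope classical_set_scope.
Local Open Scope ring_scope.

Section Helpers.
Variable R : realType.
Implicit Types x y z : nat -> R.

Lemma term_le (f : nat -> \bar R) n : (forall k, (0 <= f k)%E) ->
  (f n <= \sum_(0 <= k <oo) f k)%E.
Proof.
move=> f0; rewrite (@nneseriesD1 R f n xpredT) //.
rewrite leeDl //; apply: nneseries_ge0 => k _ _; exact: f0.
Qed.

Lemma l1_ge0 x : (0 <= l1norm x)%E.
Proof. by apply: nneseries_ge0 => k _ _; rewrite lee_fin. Qed.

Lemma l1_coord x n : ((`|x n|)%:E <= l1norm x)%E.
Proof. by apply: (term_le (fun k => (`|x k|)%:E)) => k; rewrite lee_fin. Qed.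

Lemma l1_fin x : (l1norm x <= 1%:E)%E -> exists2 r : R, l1norm x = r%:E & 0 <= r <= 1.
Proof.
move=> h; have h0 := l1_ge0 x; move: h h0.
case: (l1norm x) => [r|//|//] h h0; exists r => //.
by rewrite -!lee_fin h h0.
Qed.

Lemma l1_l2 x : (l1norm x <= 1%:E)%E -> l2 x.
Proof.
move=> h; rewrite /l2 /=; apply: (le_lt_trans _ (ltry 1)).
apply: (le_trans _ (h)); apply: lee_nneseries => [i _ _|n _].
  by rewrite lee_fin sqr_ge0.
have := le_trans (l1_coord x n) h; rewrite lee_fin => hn.
rewrite lee_fin -real_normK ?num_real // expr2.
by rewrite ler_piMr // normr_ge0.
Qed.

Lemma l1Z (t : R) x : 0 <= t -> (l1norm (fun i => (t * x i)%R) = t%:E * l1norm x)%E.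
Proof.
move=> t0; rewrite /l1norm -nneseriesZl; last by move=> i _; rewrite lee_fin.
by apply: eq_eseriesr => i _; rewrite normrM ger0_norm // EFinM.
Qed.

Lemma l1N x : l1norm (fun i => - x i) = l1norm x.
Proof. by rewrite /l1norm; apply: eq_eseriesr => i _; rewrite normrN. Qed.

Lemma l1_comb (a b : R) y z : (l1norm (fun i => (a * y i + b * z i)%R) <=
   `|a|%:E * l1norm y + `|b|%:E * l1norm z)%E.
Proof.
rewrite /l1norm -!nneseriesZl; [|by move=> i _; rewrite lee_fin..].
rewrite -nneseriesD; [|by move=> i _ _; rewrite -EFinM lee_fin mulr_ge0..].
apply: lee_nneseries => [i _ _|n _]; first by rewrite lee_fin.
by rewrite -!EFinM -EFinD lee_fin -!normrM ler_normD.
Qed.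

Lemma l10 : l1norm (fun _ : nat => (0:R)) = 0%E.
Proof. by rewrite /l1norm; apply: eseries0 => i _ _; rewrite normr0. Qed.

Definition CS : set (nat -> R) := [set x | l2 x /\ (l1norm x <= 1%:E)%E].

Lemma CS_l1 x : (l1norm x <= 1%:E)%E -> CS x.
Proof. by move=> h; split => //; apply: l1_l2. Qed.

Lemma open_icr x : (l1norm x < 1%:E)%E -> icr CS x.
Proof.
move=> hx; have [a ha a01] := l1_fin _ (ltW hx).
have a1 : a < 1 by rewrite -lte_fin -ha.
move/andP: a01 => [a0 _].
split; first exact/CS_l1/ltW.
move=> y [_ hy]; have [b hb /andP[b0 b1]] := l1_fin _ hy.
set e := (1 - a) / 4.
have e0 : 0 < e by rewrite /e; lra.
exists (fun i => (1 + e) * x i + (- e) * y i).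
  apply: CS_l1; apply: le_trans (l1_comb _ _ _ _) _.
  rewrite ha hb -!EFinM -EFinD lee_fin ger0_norm; last lra.
  rewrite normrN ger0_norm; last lra.
  have : e * (1 + a) <= 2 * e by nra.
  rewrite /e; nra.
exists ((1 + e)^-1); split; first by rewrite invr_gt0; lra.
split; first by rewrite invf_lt1; lra.
apply/funext => i /=.
have ne : 1 + e != 0 by rewrite gt_eqF //; lra.
move: ne; clearbody e => ne. field; exact: ne.
Qed.

Lemma icr_open x : icr CS x -> (l1norm x < 1%:E)%E.
Proof.
move=> [_ h]; have [|z [_ hz] [t [t0 [t1 ->]]]] := h (fun _ => 0).
  by apply: CS_l1; rewrite l10.
have -> : (fun i => (1 - t) * 0 + t * z i) = (fun i => t * z i).
  by apply/funext => i; rewrite mulr0 add0r.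
rewrite l1Z; last exact: ltW.
have [b hb /andP[b0 b1]] := l1_fin _ hz.
rewrite hb -EFinM lte_fin; nra.
Qed.

Lemma open_fri x : (l1norm x < 1%:E)%E -> fri CS x.
Proof.
move=> hx; have hi := open_icr _ hx; split; first by case: hi.
move=> u Cu; split; first by case: Cu.
move=> e e0; exists u.
  move=> F [_ [_ Fext]] Fx; have [z Cz hs] := hi.2 u Cu.
  by case: (Fext x u z Fx Cu Cz hs).
rewrite /l2sq; under eq_eseriesr do rewrite subrr expr0n /=.
by rewrite eseries0 // lte_fin exprn_gt0.
Qed.

Lemma fri_open x : fri CS x -> (l1norm x < 1%:E)%E.
Proof.
move=> [[l2x hx1] hcl].
rewrite lt_neqAle hx1 andbT; apply/negP => /eqP hx.
pose s := fun i => Num.sg (x i).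
pose F := [set y | CS y /\ l1norm y = 1%:E /\ forall i, y i * s i = `|y i|].
have sle : forall v i, v * s i <= `|v|.
  move=> v i; apply: le_trans (ler_norm _) _; rewrite normrM.
  have : `|s i| <= 1 by rewrite /s normr_sg; case: (_ != 0).
  by move=> h; rewrite ler_piMr.
have Fface : is_face CS F.
  split; first by move=> y [].
  split.
  - move=> y z [Cy [ly sy]] [Cz [lz sz]] t t0 t1.
    have key : forall i, `|(1-t)*y i + t*z i| = (1-t)* `|y i| + t* `|z i|.
      move=> i; have e2 : ((1-t)*y i + t*z i) * s i = (1-t)* `|y i| + t* `|z i|.
        by rewrite -sy -sz; ring.
      apply/le_anti; rewrite -{2}e2 sle andbT.
      have t1' : 0 <= 1 - t by lra.
      by apply: le_trans (ler_normD _ _) _; rewrite !normrM (ger0_norm t1') (ger0_norm t0).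
    have l1v : l1norm (fun i => (1-t)*y i + t*z i) = 1%:E.
      rewrite /l1norm.
      under eq_eseriesr do rewrite key EFinD !EFinM.
      rewrite nneseriesD; [|by move=> i _ _; rewrite -EFinM lee_fin mulr_ge0 //; lra..].
      rewrite !nneseriesZl; [|by move=> i _; rewrite lee_fin..].
      rewrite -/(l1norm y) -/(l1norm z) ly lz -!EFinM -EFinD; congr EFin; ring.
    split; first by apply: CS_l1; rewrite l1v.
    split; first exact: l1v.
    move=> i; rewrite key -sy -sz; ring.
  - move=> u y z [Cu [lu su]] [l2y hy] [l2z hz] [t [t0 [t1 hu]]].
    have [b hb /andP[b0 b1]] := l1_fin _ hy.
    have [c hc /andP[c0 c1]] := l1_fin _ hz.
    pose d i := (1-t)* `|y i| + t* `|z i| - `|u i|.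
    have ud : forall i, u i * s i = (1-t) * (y i * s i) + t * (z i * s i).
      by move=> i; rewrite hu; ring.
    have dE : forall i, d i = (1-t)*(`|y i| - y i * s i) + t*(`|z i| - z i * s i).
      by move=> i; rewrite /d -su ud; ring.
    have d0 : forall i, 0 <= d i.
      move=> i; rewrite dE; have := sle (y i) i; have := sle (z i) i.
      move=> h1 h2; apply: addr_ge0; apply: mulr_ge0; lra.
    have sumE : (\sum_(0 <= i <oo) ((1-t)* `|y i| + t* `|z i|)%:E = ((1 - t) * b + t * c)%R%:E)%E.
      under eq_eseriesr do rewrite EFinD !EFinM.
      rewrite nneseriesD; [|by move=> i _ _; rewrite -EFinM lee_fin mulr_ge0 //; lra..].
      rewrite !nneseriesZl; [|by move=> i _; rewrite lee_fin..].
      by rewrite -/(l1norm y) -/(l1norm z) hb hc -!EFinM -EFinD.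
    have sumE2 : (\sum_(0 <= i <oo) ((1-t)* `|y i| + t* `|z i|)%:E =
        1%:E + \sum_(0 <= i <oo) (d i)%:E)%E.
      rewrite -lu /l1norm -nneseriesD; [|by move=> i _ _; rewrite lee_fin..].
      by apply: eq_eseriesr => i _; rewrite -EFinD /d; congr EFin; ring.
    have le1 : (1%:E <= ((1 - t) * b + t * c)%:E)%E.
      rewrite -sumE sumE2 leeDl //; apply: nneseries_ge0 => i _ _; rewrite lee_fin.
      exact: d0.
    rewrite lee_fin in le1.
    have b1' : b = 1 by nra.
    have c1' : c = 1 by nra.
    have dz : forall i, d i = 0.
      move=> i; apply/le_anti; rewrite d0 andbT -lee_fin.
      have : (\sum_(0 <= i <oo) (d i)%:E = 0)%E.
        move: sumE2; rewrite sumE b1' c1'.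
        have -> : (1 - t) * 1 + t * 1 = 1 by ring.
        case: (\sum_(0 <= i <oo) (d i)%:E)%E => [r||] //=.
        by rewrite -EFinD => -[h]; congr EFin; lra.
      move=> h0; apply: (le_trans (term_le (fun k => (d k)%:E) i _)).
        by move=> k; rewrite lee_fin; exact: d0.
      by rewrite h0.
    have yz : forall i, y i * s i = `|y i| /\ z i * s i = `|z i|.
      move=> i; have := dz i; rewrite dE; have := sle (y i) i; have := sle (z i) i.
      move=> h1 h2 h3; split; nra.
    split; split.
    + by split.
    + by split; [rewrite hb b1'| move=> i; case: (yz i)].
    + by split.
    + by split; [rewrite hc c1'| move=> i; case: (yz i)].
have Fx : F x.
  split; first by split.
  by split => // i; rewrite /s normrEsg mulrC.
have [j xj] : exists j, x j != 0.
  case: (pselect (exists j, x j != 0)) => [//|nx]; exfalso.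
  have x0 : x = fun _ => 0.
    by apply/funext => i; apply/eqP/negPn/negP => h; apply: nx; exists i.
  by move: hx; rewrite x0 l10 => -[] /eqP; rewrite eq_sym oner_eq0.
have Cw : CS (fun i => - x i) by apply: CS_l1; rewrite l1N hx.
have [_ /(_ `|x j|)] := hcl _ Cw.
case; first by rewrite normr_gt0.
move=> y Fy hlt.
have [_ [_ sy]] := Fy F Fface Fx.
have xy : 0 <= x j * y j.
  have -> : x j * y j = `|x j| * (y j * s j) by rewrite {1}(numEsg (x j)) /s; ring.
  by rewrite sy mulr_ge0.
have h' : (((- x j - y j) ^+ 2)%:E <= l2sq (fun i => (- x i - y i)%R))%E.
  by apply: (term_le (fun i => ((- x i - y i) ^+ 2)%:E) j) => k; rewrite lee_fin sqr_ge0.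
have := le_lt_trans h' hlt; rewrite lte_fin real_normK ?num_real //.
nra.
Qed.

End Helpers.

Theorem mainTheorem19 (R : realType) :
  let C := [set x : nat -> R | l2 x /\ (l1norm x <= 1%:E)%E] in
  icr C = fri C /\
  fri C = [set x : nat -> R | l2 x /\ (l1norm x < 1%:E)%E].
Proof.
move=> C.
have e1 : icr C = [set x : nat -> R | l2 x /\ (l1norm x < 1%:E)%E].
  apply/seteqP; split => x.
  - move=> h; split; [by case: h => -[] | exact: (@icr_open R x h)].
  - by move=> [_ h]; exact: (@open_icr R x h).
have e2 : fri C = [set x : nat -> R | l2 x /\ (l1norm x < 1%:E)%E].
  apply/seteqP; split => x.
  - move=> h; split; [by case: h => -[] | exact: (@fri_open R x h)].
  - by move=> [_ h]; exact: (@open_fri R x h).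
by rewrite e1 e2.
Qed.
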